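(* Let $H$ be a hypergraph, $k$ a positive integer, and $H_1,H_2$ hypergraphs with $H=H_1\cup H_2$, and let $S$ be a set with $V(H_1)\cap V(H_2)\subseteq S$ and $S\subseteq V(H_1)\cap V(H_2)$. Let $A_1,\dots,A_k\in tr_S(i(H))$ be such that $A_1\cup\dots\cup A_k\supseteq S$. Then the following are equivalent: (1) $f_H^S(A_1,\dots,A_k)=1$; (2) there exist $A_i^j\in tr_S(i(H_j))$ for $i\in[k]$, $j\in[2]$ such that $A_i\subseteq A_i^1\cap A_i^2$ for all $i$, and $f_{H_j}^S(A_1^j,\dots,A_k^j)=1$ for $j=1,2$.
   Context: A hypergraph $H$ has a finite vertex set $V(H)$ and a set $E(H)$ of subsets of $V(H)$. A set of vertices is independent if it contains no edge; $i(H)$ is the family of inclusion-wise maximal independent sets of $H$. $H=H_1\cup H_2$ means $V(H)=V(H_1)\cup V(H_2)$ and $E(H)=E(H_1)\cup E(H_2)$. For a family $\mathcal{F}$, $tr_S(\mathcal{F})=\{F\cap S:F\in\mathcal{F}\}$. For a hypergraph $H$ and $S\subseteq V(H)$, define $f_H^S(A_1,\dots,A_k)=1$ if $A_1\cup\dots\cup A_k\supseteq S$ and there exist $I_1,\dots,I_k\in i(H)$ with $I_1\cup\dots\cup I_k=V(H)$ and $A_i\subseteq I_i$ for all $i$; and $f_H^S(A_1,\dots,A_k)=0$ otherwise. *)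

(* Defs.v *)
From mathcomp Require Import all_boot.
Set Implicit Arguments. Unset Strict Implicit. Unset Printing Implicit Defensive.

Section Hyper.
Variable T : finType.

Definition hypergraph (V : {set T}) (E : {set {set T}}) : Prop :=
  forall e, e \in E -> e \subset V.

Definition independent (V : {set T}) (E : {set {set T}}) (I : {set T}) : bool :=
  (I \subset V) && [forall e in E, ~~ (e \subset I)].

Definition maxindep (V : {set T}) (E : {set {set T}}) (I : {set T}) : bool :=
  maxset (independent V E) I.

Definition in_tr_mis (V : {set T}) (E : {set {set T}}) (S A : {set T}) : Prop :=
  exists I, maxindep V E I /\ A = I :&: S.

Definition fHS (V : {set T}) (E : {set {set T}}) (S : {set T}) (k : nat)
  (A : 'I_k -> {set T}) : Prop :=
  S \subset \bigcup_(i < k) A i /\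
  exists I : 'I_k -> {set T},
    (forall i, maxindep V E (I i)) /\ \bigcup_(i < k) I i = V /\
    (forall i, A i \subset I i).
End Hyper.

(* Main.v *)
Require Import Defs.
From mathcomp Require Import all_boot.

Set Implicit Arguments. Unset Strict Implicit.
Section Aux.
Variable T : finType.

Lemma mis_indep (V : {set T}) (E : {set {set T}}) (I : {set T}) : maxindep V E I ->
  I \subset V /\ forall e, e \in E -> ~~ (e \subset I).
Proof.
move=> /maxsetp /andP [H1 /forall_inP H2]; split => // e He; exact: H2.
Qed.

Lemma indep_intro (V : {set T}) (E : {set {set T}}) (I : {set T}) : I \subset V ->
  (forall e, e \in E -> ~~ (e \subset I)) -> independent V E I.
Proof. by move=> H1 H2; apply/andP; split => //; apply/forall_inP. Qed.

Lemma restr_indep (V V1 : {set T}) (E E1 : {set {set T}}) (I : {set T}) :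
  E1 \subset E -> maxindep V E I -> independent V1 E1 (I :&: V1).
Proof.
move=> sE /mis_indep [_ HI]; apply: indep_intro; first exact: subsetIr.
move=> e He; apply/negP => sub; have := HI e (subsetP sE _ He).
by rewrite (subset_trans sub (subsetIl _ _)).
Qed.

End Aux.

Theorem mainTheorem10 (T : finType)
  (V : {set T}) (E : {set {set T}})
  (V1 : {set T}) (E1 : {set {set T}})
  (V2 : {set T}) (E2 : {set {set T}})
  (k : nat) (S : {set T}) (A : 'I_k -> {set T}) :
  hypergraph V1 E1 -> hypergraph V2 E2 -> hypergraph V E ->
  0 < k ->
  V = V1 :|: V2 -> E = E1 :|: E2 ->
  V1 :&: V2 \subset S -> S \subset V1 :&: V2 ->
  (forall i, in_tr_mis V E S (A i)) ->
  S \subset \bigcup_(i < k) A i ->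
  (fHS V E S A <->
   exists A1 A2 : 'I_k -> {set T},
     (forall i, in_tr_mis V1 E1 S (A1 i)) /\
     (forall i, in_tr_mis V2 E2 S (A2 i)) /\
     (forall i, A i \subset A1 i :&: A2 i) /\
     fHS V1 E1 S A1 /\ fHS V2 E2 S A2).
Proof.
move=> hyp1 hyp2 hyp _ eV eE s12S sS12 Atr SA.
have sE1 : E1 \subset E by rewrite eE subsetUl.
have sE2 : E2 \subset E by rewrite eE subsetUr.
split.
- case=> _ [I [Imis [Icov AI]]].
  pose J1 i := sval (maxset_exists (@restr_indep _ V V1 _ _ _ sE1 (Imis i))).
  pose J2 i := sval (maxset_exists (@restr_indep _ V V2 _ _ _ sE2 (Imis i))).
  have J1m i : maxindep V1 E1 (J1 i) by rewrite /J1; case: maxset_exists.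
  have J2m i : maxindep V2 E2 (J2 i) by rewrite /J2; case: maxset_exists.
  have J1s i : I i :&: V1 \subset J1 i by rewrite /J1; case: maxset_exists.
  have J2s i : I i :&: V2 \subset J2 i by rewrite /J2; case: maxset_exists.
  have AS i : A i \subset S.
    by case: (Atr i) => K [_ ->]; exact: subsetIr.
  have AJ1 i : A i \subset J1 i :&: S.
    rewrite subsetI AS andbT; apply: subset_trans (J1s i).
    rewrite subsetI AI /=; apply: subset_trans (AS i) _.
    by apply: subset_trans sS12 _; exact: subsetIl.
  have AJ2 i : A i \subset J2 i :&: S.
    rewrite subsetI AS andbT; apply: subset_trans (J2s i).
    rewrite subsetI AI /=; apply: subset_trans (AS i) _.
    by apply: subset_trans sS12 _; exact: subsetIr.
  have cov (Vj : {set T}) (J : 'I_k -> {set T}) :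
      Vj \subset V -> (forall i, J i \subset Vj) ->
      (forall i, I i :&: Vj \subset J i) -> \bigcup_(i < k) J i = Vj.
    move=> sV JV IJ; apply/eqP; rewrite eqEsubset; apply/andP; split.
      by apply/bigcupsP => i _; exact: JV.
    apply/subsetP => v vV.
    have : v \in \bigcup_(i < k) I i by rewrite Icov (subsetP sV).
    case/bigcupP => i _ vI; apply/bigcupP; exists i => //.
    by apply: (subsetP (IJ i)); rewrite inE vI.
  exists (fun i => J1 i :&: S), (fun i => J2 i :&: S).
  split; first by move=> i; exists (J1 i).
  split; first by move=> i; exists (J2 i).
  split; first by move=> i; rewrite subsetI AJ1 AJ2.
  have SU (J : 'I_k -> {set T}) : (forall i, A i \subset J i) ->
      S \subset \bigcup_(i < k) J i.
    move=> AJ; apply: subset_trans SA _; apply/bigcupsP => i _.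
    by apply: subset_trans (AJ i) _; apply: (bigcup_sup i).
  split; split.
  + by apply: SU.
  + exists J1; split => //; split; last by move=> i; exact: subsetIl.
    apply: cov; first by rewrite eV subsetUl.
      by move=> i; case: (mis_indep (J1m i)).
    exact: J1s.
  + by apply: SU.
  + exists J2; split => //; split; last by move=> i; exact: subsetIl.
    apply: cov; first by rewrite eV subsetUr.
      by move=> i; case: (mis_indep (J2m i)).
    exact: J2s.
- case=> [A1 [A2 [_ [_ [AA [[_ [J1 [J1m [J1c A1J]]]] [_ [J2 [J2m [J2c A2J]]]]]]]]]].
  have AS i : A i \subset S.
    by case: (Atr i) => K [_ ->]; exact: subsetIr.
  pose K i := A i :|: (J1 i :\: S) :|: (J2 i :\: S).
  have KI i : independent V E (K i).
    case: (mis_indep (J1m i)) => J1V J1i.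
    case: (mis_indep (J2m i)) => J2V J2i.
    have AJ1 : A i \subset J1 i.
      apply: subset_trans (A1J i); apply: subset_trans (AA i) _; exact: subsetIl.
    have AJ2 : A i \subset J2 i.
      apply: subset_trans (A2J i); apply: subset_trans (AA i) _; exact: subsetIr.
    apply: indep_intro.
      rewrite !subUset; apply/andP; split; first (apply/andP; split).
      * apply: subset_trans (AS i) _; apply: subset_trans sS12 _.
        by rewrite eV; apply: subset_trans (subsetIl _ _) (subsetUl _ _).
      * by rewrite eV; apply: subset_trans (subsetDl _ _) _;
          apply: subset_trans J1V (subsetUl _ _).
      * by rewrite eV; apply: subset_trans (subsetDl _ _) _;
          apply: subset_trans J2V (subsetUr _ _).
    move=> e; rewrite eE inE => /orP [] He; apply/negP => sub.
    + have eV1 := hyp1 e He.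
      have : e \subset J1 i.
        apply/subsetP => v ve; have vK := subsetP sub v ve.
        have vV1 := subsetP eV1 v ve.
        move: vK; rewrite !inE => /orP [/orP [vA | /andP [_ ->]] | /andP [vS vJ2]] //.
        * exact: (subsetP AJ1).
        * case/negP: vS; apply: (subsetP s12S); rewrite inE vV1.
          exact: (subsetP J2V).
      by apply/negP; apply: J1i.
    + have eV2 := hyp2 e He.
      have : e \subset J2 i.
        apply/subsetP => v ve; have vK := subsetP sub v ve.
        have vV2 := subsetP eV2 v ve.
        move: vK; rewrite !inE => /orP [/orP [vA | /andP [vS vJ1]] | /andP [_ ->]] //.
        * exact: (subsetP AJ2).
        * case/negP: vS; apply: (subsetP s12S); rewrite inE vV2 andbT.
          exact: (subsetP J1V).
      by apply/negP; apply: J2i.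
  pose I i := sval (maxset_exists (KI i)).
  have Im i : maxindep V E (I i) by rewrite /I; case: maxset_exists.
  have Ks i : K i \subset I i by rewrite /I; case: maxset_exists.
  split => //; exists I; split => //; split.
  + apply/eqP; rewrite eqEsubset; apply/andP; split.
      by apply/bigcupsP => i _; case: (mis_indep (Im i)).
    apply/subsetP => v; rewrite eV inE => vV.
    case vS : (v \in S).
      case/bigcupP: (subsetP SA v vS) => i _ vA.
      apply/bigcupP; exists i => //; apply: (subsetP (Ks i)); by rewrite !inE vA.
    case/orP: vV => vV.
      move: vV; rewrite -J1c => /bigcupP [i _ vJ].
      apply/bigcupP; exists i => //; apply: (subsetP (Ks i)); by rewrite !inE vS vJ orbT.
    move: vV; rewrite -J2c => /bigcupP [i _ vJ].
    apply/bigcupP; exists i => //; apply: (subsetP (Ks i)); by rewrite !inE vS vJ orbT.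
  + move=> i; apply: subset_trans (Ks i); rewrite /K -setUA; exact: subsetUl.
Qed.
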